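(* Let $P$ be a classifier on $\mathbb{R}^n$ with infinite pointwise coverage. Then the label set $L_P$ has at most two elements.
   Context: A classifier is a partition $P$ of $\mathbb{R}^n$ together with a distinguished member $R \in P$, the refinement set, which may be empty and which is both meagre and Lebesgue null. The label set is $L_P = P \setminus \{R\}$ and the feature space is $\bigcup L_P$. For $x \in \mathbb{R}^n$, $P(x)$ denotes the member of $P$ containing $x$. An anchor for $x$ is an open ball $A = B(c,r)$ with $x \in A \subseteq P(x)$; its coverage is $r$. The coverage of $P$ at $x$ is $C_P(x) = \sup\{ r : B(c,r) \text{ is an anchor for } x\}$ ($0$ if no anchor exists, $\infty$ if anchors of arbitrarily large radius exist). $P$ has infinite pointwise coverage if $C_P(x) = \infty$ for every $x$ in the feature space. *)

(* Defs.v *)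
From mathcomp Require Import all_boot all_order all_algebra.
From mathcomp Require Import all_classical all_reals ereal.
Local Open Scope ereal_scope.
Set Implicit Arguments. Unset Strict Implicit. Unset Printing Implicit Defensive.
Import Order.TTheory GRing.Theory Num.Theory.
Local Open Scope classical_set_scope.
Local Open Scope ring_scope.

Section Defs.
Variables (R : realType) (n : nat).

Definition pt := 'I_n -> R.

Definition edist (x y : pt) : R := Num.sqrt (\sum_(i < n) (x i - y i) ^+ 2).

Definition eball (c : pt) (r : R) : set pt := [set y | edist c y < r].

Definition interior_e (A : set pt) : set pt :=
  [set x | exists r, 0 < r /\ eball x r `<=` A].
Definition closure_e (A : set pt) : set pt :=
  [set x | forall r, 0 < r -> exists y, A y /\ eball x r y].
Definition nowhere_dense_e (A : set pt) : Prop := interior_e (closure_e A) = set0.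
Definition meagre (A : set pt) : Prop :=
  exists F : nat -> set pt, (forall k, nowhere_dense_e (F k)) /\
    A `<=` \bigcup_k F k.

Definition obox (a b : pt) : set pt := [set y | forall i, a i < y i < b i].
Definition bvol (a b : pt) : R := \prod_(i < n) (b i - a i).
Definition lebesgue_null (A : set pt) : Prop :=
  forall eps : R, 0 < eps ->
    exists a b : nat -> pt,
      (forall k i, a k i < b k i) /\
      A `<=` \bigcup_k obox (a k) (b k) /\
      (forall N, \sum_(k < N) bvol (a k) (b k) <= eps).

(* A classifier: a partition P of R^n (its members other than the
   refinement set are nonempty) with a distinguished member Rf, the
   refinement set, which may be empty and is meagre and Lebesgue null. *)
Definition is_classifier (P : set (set pt)) (Rf : set pt) : Prop :=
  (forall A, P A -> A <> Rf -> A !=set0) /\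
  (forall x : pt, exists A, P A /\ A x) /\
  (forall A B, P A -> P B -> A <> B -> A `&` B = set0) /\
  P Rf /\ meagre Rf /\ lebesgue_null Rf.

Definition label_set (P : set (set pt)) (Rf : set pt) : set (set pt) :=
  [set A | P A /\ A <> Rf].

Definition feature_space (P : set (set pt)) (Rf : set pt) : set pt :=
  [set x | exists A, label_set P Rf A /\ A x].

Definition anchor (P : set (set pt)) (x c : pt) (r : R) : Prop :=
  eball c r x /\ exists A, [/\ P A, A x & eball c r `<=` A].

(* coverage C_P(x) = sup of anchor radii (0 if no anchor, +oo if unbounded) *)
Definition coverage (P : set (set pt)) (x : pt) : \bar R :=
  ereal_sup ([set (r%:E) | r in [set r | exists c, anchor P x c r]] `|` [set 0%E]).

Definition infinite_pointwise_coverage (P : set (set pt)) (Rf : set pt) : Prop :=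
  forall x, feature_space P Rf x -> coverage P x = +oo%E.

End Defs.

(* Main.v *)
Require Import Defs.
From mathcomp Require Import all_boot all_order all_algebra.
From mathcomp Require Import all_classical all_reals ereal.
From mathcomp Require Import ring lra.
Set Implicit Arguments. Unset Strict Implicit. Unset Printing Implicit Defensive.
Import Order.TTheory GRing.Theory Num.Theory.
Local Open Scope classical_set_scope.
Local Open Scope ring_scope.

Section Helpers.
Variables (R : realType) (n : nat).
Implicit Types (x y z c : pt R n) (a b : 'I_n -> R).

Let sq a := \sum_(i < n) a i ^+ 2.
Let dot a b := \sum_(i < n) a i * b i.

Let sq_ge0 a : 0 <= sq a.
Proof. by apply: sumr_ge0 => i _; exact: sqr_ge0. Qed.

Let CS a b : dot a b ^+ 2 <= sq a * sq b.
Proof.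
have [hb|hb] := eqVneq (sq b) 0.
  have bz : forall i, b i = 0.
    move=> i; have H := psumr_eq0P (fun j _ => sqr_ge0 (b j)) hb.
    by apply/eqP; rewrite -sqrf_eq0; apply/eqP; apply: H.
  have -> : dot a b = 0 by rewrite /dot big1 // => i _; rewrite bz mulr0.
  by rewrite hb mulr0 expr0n.
have sbp : 0 < sq b by rewrite lt_def hb sq_ge0.
set t := dot a b / sq b.
have ht : dot a b = t * sq b by rewrite /t divfK.
have E : sq (fun i => a i - t * b i) = sq a - 2 * t * dot a b + t ^+ 2 * sq b.
  rewrite /sq /dot mulr_sumr mulr_sumr -sumrB -big_split /=.
  by apply: eq_bigr => i _; ring.
have := sq_ge0 (fun i => a i - t * b i); rewrite E ht => h.
nra.
Qed.

Let tri a b : Num.sqrt (sq (fun i => a i + b i)) <= Num.sqrt (sq a) + Num.sqrt (sq b).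
Proof.
have E : sq (fun i => a i + b i) = sq a + 2 * dot a b + sq b.
  rewrite /sq /dot mulr_sumr -!big_split /=.
  by apply: eq_bigr => i _; ring.
have hd : dot a b <= Num.sqrt (sq a) * Num.sqrt (sq b).
  rewrite -sqrtrM ?sq_ge0 //; apply: (le_trans (ler_norm _)).
  by rewrite -sqrtr_sqr ler_sqrt ?mulr_ge0 ?sq_ge0 // CS.
have h1 := sqr_sqrtr (sq_ge0 a); have h2 := sqr_sqrtr (sq_ge0 b).
have g1 := sqrtr_ge0 (sq a); have g2 := sqrtr_ge0 (sq b).
rewrite -[X in _ <= X]ger0_norm ?addr_ge0 // -sqrtr_sqr ler_sqrt ?sqr_ge0 // E.
nra.
Qed.

Lemma edist_sym x y : edist x y = edist y x.
Proof. by rewrite /edist; congr Num.sqrt; apply: eq_bigr => i _; ring. Qed.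

Lemma edist_ge0 x y : 0 <= edist x y.
Proof. exact: sqrtr_ge0. Qed.

Lemma edist_tri x y z : edist x z <= edist x y + edist y z.
Proof.
rewrite /edist.
have -> : \sum_(i < n) (x i - z i) ^+ 2 =
   sq (fun i => (x i - y i) + (y i - z i)).
  by apply: eq_bigr => i _; congr (_ ^+ 2); ring.
exact: (tri (fun i => x i - y i) (fun i => y i - z i)).
Qed.

Lemma edist_scale1 x z t : edist x (fun i => x i + t * (z i - x i)) = `|t| * edist x z.
Proof.
rewrite /edist -sqrtr_sqr -sqrtrM ?sqr_ge0 //; congr Num.sqrt.
by rewrite mulr_sumr; apply: eq_bigr => i _; ring.
Qed.

Lemma edist_scale2 x z t : edist z (fun i => x i + t * (z i - x i)) = `|1 - t| * edist x z.
Proof.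
rewrite /edist -sqrtr_sqr -sqrtrM ?sqr_ge0 //; congr Num.sqrt.
by rewrite mulr_sumr; apply: eq_bigr => i _; ring.
Qed.

Lemma key3 c1 c2 c3 x :
  edist c1 c2 ^+ 2 + edist c2 c3 ^+ 2 + edist c1 c3 ^+ 2 <=
  3 * (edist c1 x ^+ 2 + edist c2 x ^+ 2 + edist c3 x ^+ 2).
Proof.
rewrite /edist !sqr_sqrtr; try (by apply: sumr_ge0 => i _; exact: sqr_ge0).
rewrite -!big_split /= mulr_sumr; apply: ler_sum => i _.
have := sqr_ge0 ((c1 i - x i) + (c2 i - x i) + (c3 i - x i)).
nra.
Qed.

End Helpers.


Section Main.
Variables (R : realType) (n : nat) (P : set (set (pt R n))) (Rf : set (pt R n)).
Hypothesis HP : is_classifier P Rf.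
Hypothesis Hinf : infinite_pointwise_coverage P Rf.

Lemma same_member A B x : P A -> P B -> A x -> B x -> A = B.
Proof.
move=> PA PB Ax Bx; case: (pselect (A = B)) => // AB.
have [_ [_ [D _]]] := HP.
have := D A B PA PB AB; move/seteqP => [/(_ x) H _].
by case: (H (conj Ax Bx)).
Qed.

Lemma big_anchor A x M : label_set P Rf A -> A x -> 0 <= M ->
  exists c r, M < r /\ edist c x < r /\ eball c r `<=` A.
Proof.
move=> [PA ARf] Ax M0.
have Fx : feature_space P Rf x by exists A.
have := Hinf Fx; rewrite /coverage => Hs.
have : (M%:E < ereal_sup ([set r%:E | r in [set r | exists c, anchor P x c r]] `|` [set 0%E]))%E
  by rewrite Hs ltry.
move=> /ereal_sup_gt [y [[r [c [Hc [A' [PA' A'x sub]]]]] <-|->]] My.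
  have EA := same_member PA' PA A'x Ax; subst A'.
  by exists c, r; split; [rewrite -lte_fin|].
by exfalso; move: My; rewrite lte_fin; lra.
Qed.

Lemma anchorR A x R0 : label_set P Rf A -> A x -> 0 < R0 ->
  exists c, edist c x < R0 /\ eball c R0 `<=` A.
Proof.
move=> LA Ax R0p.
have [c [r [Mr [cx sub]]]] := big_anchor LA Ax (ltW R0p).
have rp : 0 < r by lra.
set t := R0 / r.
have tr : t * r = R0 by rewrite /t divfK // gt_eqF.
have t0 : 0 <= t by rewrite /t divr_ge0 // ltW.
have t1 : t <= 1 by rewrite /t ler_pdivrMr // mul1r ltW.
exists (fun i => x i + t * (c i - x i)); split.
  rewrite edist_sym edist_scale1 ger0_norm // edist_sym.
  have := edist_ge0 c x; nra.
move=> y Hy; apply: sub; rewrite /eball /=.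
apply: (le_lt_trans (edist_tri c (fun i => x i + t * (c i - x i)) y)).
rewrite edist_scale2 ger0_norm ?subr_ge0 // edist_sym.
move: Hy; rewrite /eball /= => Hy.
have := edist_ge0 c x; nra.
Qed.

Lemma far A1 A2 c1 c2 R0 : P A1 -> P A2 -> A1 <> A2 -> 0 < R0 ->
  eball c1 R0 `<=` A1 -> eball c2 R0 `<=` A2 -> 2 * R0 <= edist c1 c2.
Proof.
move=> P1 P2 A12 R0p s1 s2; rewrite leNgt; apply/negP => H.
set y := fun i => c1 i + 2^-1 * (c2 i - c1 i).
have d1 : edist c1 y < R0.
  rewrite /y edist_scale1 ger0_norm ?invr_ge0 //; lra.
have d2 : edist c2 y < R0.
  rewrite /y edist_scale2.
  have -> : 1 - 2^-1 = 2^-1 :> R by field.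
  rewrite ger0_norm ?invr_ge0 //; lra.
have := same_member P1 P2 (s1 y d1) (s2 y d2); done.
Qed.

Lemma no_three A1 A2 A3 : label_set P Rf A1 -> label_set P Rf A2 -> label_set P Rf A3 ->
  A1 <> A2 -> A2 <> A3 -> A1 <> A3 -> False.
Proof.
move=> L1 L2 L3 n12 n23 n13.
have [Hne _] := HP.
have [x1 x1A] := Hne _ L1.1 L1.2.
have [x2 x2A] := Hne _ L2.1 L2.2.
have [x3 x3A] := Hne _ L3.1 L3.2.
set D := edist x2 x1 + edist x3 x1.
have D2 := edist_ge0 x2 x1; have D3 := edist_ge0 x3 x1.
set R0 := 10 * D + 1.
have R0p : 0 < R0 by rewrite /R0 /D; lra.
have [c1 [h1 s1]] := anchorR L1 x1A R0p.
have [c2 [h2 s2]] := anchorR L2 x2A R0p.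
have [c3 [h3 s3]] := anchorR L3 x3A R0p.
have f12 := far L1.1 L2.1 n12 R0p s1 s2.
have f23 := far L2.1 L3.1 n23 R0p s2 s3.
have f13 := far L1.1 L3.1 n13 R0p s1 s3.
have e1 : edist c1 x1 < R0 + D by rewrite /D; lra.
have e2 : edist c2 x1 < R0 + D.
  apply: (le_lt_trans (edist_tri c2 x2 x1)); rewrite /D; lra.
have e3 : edist c3 x1 < R0 + D.
  apply: (le_lt_trans (edist_tri c3 x3 x1)); rewrite /D; lra.
have K := key3 c1 c2 c3 x1.
have g1 := edist_ge0 c1 x1; have g2 := edist_ge0 c2 x1; have g3 := edist_ge0 c3 x1.
have q1 : edist c1 x1 ^+ 2 <= (R0 + D) ^+ 2 by rewrite ler_pXn2r ?nnegrE //; lra.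
have q2 : edist c2 x1 ^+ 2 <= (R0 + D) ^+ 2 by rewrite ler_pXn2r ?nnegrE //; lra.
have q3 : edist c3 x1 ^+ 2 <= (R0 + D) ^+ 2 by rewrite ler_pXn2r ?nnegrE //; lra.
have p12 : (2 * R0) ^+ 2 <= edist c1 c2 ^+ 2 by rewrite ler_pXn2r ?nnegrE //; lra.
have p23 : (2 * R0) ^+ 2 <= edist c2 c3 ^+ 2 by rewrite ler_pXn2r ?nnegrE //; lra.
have p13 : (2 * R0) ^+ 2 <= edist c1 c3 ^+ 2 by rewrite ler_pXn2r ?nnegrE //; lra.
have HD : 0 <= D by rewrite /D; lra.
rewrite /R0 in q1 q2 q3 p12 p23 p13.
clear -K q1 q2 q3 p12 p23 p13 HD.
nra.
Qed.

End Main.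

Theorem lemma3 (R : realType) (n : nat) (P : set (set (pt R n))) (Rf : set (pt R n)) :
  is_classifier P Rf ->
  infinite_pointwise_coverage P Rf ->
  exists a b : set (pt R n), forall A, label_set P Rf A -> A = a \/ A = b.
Proof.
move=> HP Hinf.
case: (pselect (exists a, label_set P Rf a)) => [[a Ha]|none]; last first.
  by exists set0, set0 => A HA; exfalso; apply: none; exists A.
case: (pselect (exists b, label_set P Rf b /\ b <> a)) => [[b [Hb Hba]]|nob]; last first.
  exists a, a => A HA; left; case: (pselect (A = a)) => // Aa.
  by exfalso; apply: nob; exists A.
exists a, b => A HA.
case: (pselect (A = a)) => [|Aa]; first by left.
case: (pselect (A = b)) => [|Ab]; first by right.
by exfalso; apply: (no_three HP Hinf Ha Hb HA) => // ?; subst.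
Qed.
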